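(* For integers $r\ge0$ and $k\ge 1$ let $\mathcal{N}(r;k)$ be the number of proper complete $(r-1,k)$-graphs on the vertex set $\{1,\dots,k\}$, and set $\mathcal{N}(r;0)=1$ for all $r\ge0$. Then $\mathcal{N}(0;k)=1$ for all $k$, and for $r,k\ge1$ \[\mathcal{N}(r;k)=\frac12\sum_{a=0}^{k}\binom{k}{a}\mathcal{N}(r-1;a)\mathcal{N}(r-1;k-a).\] Equivalently the formal series $E(X;r)=\sum_{k\ge0}\mathcal{N}(r;k)X^k/k!$ satisfy $E(X;0)=e^X$ and $E(X;r)=\tfrac12\big(1+E(X;r-1)^2\big)$ for $r\ge1$. Consequently there are real numbers $\nu(r;m)\ge0$ ($0\le m\le 2^r$) with $\sum_m\nu(r;m)=1$ such that $\mathcal{N}(r;k)=\sum_{m=0}^{2^r}\nu(r;m)m^k$ for all $k\ge 0$ (with $0^0=1$), and $\nu(r;0)=1-\mu_r$.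
   Context: A $(D,k)$-graph is a weighted graph on $k$ vertices in which each edge $ij$ carries an integer weight $d(i,j)\in[-1,D]$; it is complete if every pair of distinct vertices is joined by an edge. A complete $(D,k)$-graph is proper if for all distinct vertices $a,b,c$ with $d(a,b)\le d(a,c)\le d(b,c)$ one has either $d(a,b)=d(a,c)=d(b,c)=-1$, or $d(a,b)<d(a,c)=d(b,c)$. (A graph on one vertex has no edges and counts as proper complete.) The constants $\mu_r$ are defined by $\mu_0=1$, $\mu_{r+1}=\mu_r-\tfrac12\mu_r^2$. *)

(* Defs.v *)
From HB Require Import structures.
From mathcomp Require Import all_boot all_order all_algebra.
Set Implicit Arguments. Unset Strict Implicit. Unset Printing Implicit Defensive.
Import Order.TTheory GRing.Theory Num.Theory.

(* A complete (r-1,k)-graph on vertex set 'I_k is encoded by a finite function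
   d : 'I_k * 'I_k -> 'I_(r+1); the weight of edge {i,j} is (d (i,j)) - 1,
   which ranges over the integers in [-1, r-1].  To get a bijection with edge
   weightings we require d symmetric and d (i,i) = 0 on the diagonal
   (diagonal values carry no information). *)

Definition wt (k r : nat) (d : {ffun 'I_k * 'I_k -> 'I_r.+1}) (i j : 'I_k) : int :=
  ((nat_of_ord (d (i, j)))%:Z - 1)%R.

Definition edge_weighting (k r : nat) (d : {ffun 'I_k * 'I_k -> 'I_r.+1}) : bool :=
  [forall i : 'I_k, forall j : 'I_k,
     (d (i, j) == d (j, i)) && ((i == j) ==> (nat_of_ord (d (i, j)) == 0%N))].

Definition proper_graph (k r : nat) (d : {ffun 'I_k * 'I_k -> 'I_r.+1}) : bool :=
  [forall a : 'I_k, forall b : 'I_k, forall c : 'I_k,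
     [&& a != b, a != c & b != c] ==>
     (((wt d a b <= wt d a c)%R && (wt d a c <= wt d b c)%R) ==>
      ([&& wt d a b == (-1)%R, wt d a c == (-1)%R & wt d b c == (-1)%R]
       || ((wt d a b < wt d a c)%R && (wt d a c == wt d b c))))].

Definition Ncount (r k : nat) : nat :=
  if k is 0 then 1%N
  else #|[pred d : {ffun 'I_k * 'I_k -> 'I_r.+1} | edge_weighting d && proper_graph d]|.

Fixpoint mu (R : fieldType) (r : nat) : R :=
  match r with
  | 0 => 1%R
  | r'.+1 => (mu R r' - (mu R r') ^+ 2 / 2%:R)%R
  end.

(* Main.v *)
Require Import Defs.
From HB Require Import structures.
From mathcomp Require Import all_boot all_order all_algebra.
From mathcomp Require Import zify ring lra.
Import Order.TTheory GRing.Theory Num.Theory.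
Set Implicit Arguments. Unset Strict Implicit. Unset Printing Implicit Defensive.

Section Gen.
Variables (T : finType) (r : nat).
Definition wtT (d : {ffun T * T -> 'I_r.+1}) (i j : T) : int :=
  ((nat_of_ord (d (i, j)))%:Z - 1)%R.
Definition ewT (d : {ffun T * T -> 'I_r.+1}) : bool :=
  [forall i : T, forall j : T,
     (d (i, j) == d (j, i)) && ((i == j) ==> (nat_of_ord (d (i, j)) == 0%N))].
Definition properT (d : {ffun T * T -> 'I_r.+1}) : bool :=
  [forall a : T, forall b : T, forall c : T,
     [&& a != b, a != c & b != c] ==>
     (((wtT d a b <= wtT d a c)%R && (wtT d a c <= wtT d b c)%R) ==>
      ([&& wtT d a b == (-1)%R, wtT d a c == (-1)%R & wtT d b c == (-1)%R]
       || ((wtT d a b < wtT d a c)%R && (wtT d a c == wtT d b c))))].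
Definition validT d := ewT d && properT d.

Definition VP (d : {ffun T * T -> 'I_r.+1}) : Prop :=
  [/\ forall i j, nat_of_ord (d (i, j)) = d (j, i),
      forall i, nat_of_ord (d (i, i)) = 0%N &
      forall a b c, a <> b -> a <> c -> b <> c ->
        (d (a, b) <= d (a, c))%N -> (d (a, c) <= d (b, c))%N ->
        (nat_of_ord (d (a, b)) = 0%N /\ nat_of_ord (d (a, c)) = 0%N /\ nat_of_ord (d (b, c)) = 0%N)
        \/ ((d (a, b) < d (a, c))%N /\ nat_of_ord (d (a, c)) = d (b, c))].

Lemma aux_le (x y : nat) : ((x%:Z - 1 <= y%:Z - 1)%R = (x <= y)%N).
Proof. by apply/idP/idP; lia. Qed.
Lemma aux_lt (x y : nat) : ((x%:Z - 1 < y%:Z - 1)%R = (x < y)%N).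
Proof. by apply/idP/idP; lia. Qed.
Lemma aux_eq1 (x : nat) : ((x%:Z - 1 == -1)%R = (x == 0)%N).
Proof. by apply/eqP/eqP; lia. Qed.
Lemma aux_eq (x y : nat) : ((x%:Z - 1 == y%:Z - 1)%R = (x == y)%N).
Proof. by apply/eqP/eqP; lia. Qed.

Lemma validP d : validT d <-> VP d.
Proof.
rewrite /validT /ewT /properT /wtT; split.
- move=> /andP [/forallP H1 /forallP H2]; split.
  + move=> i j; by have /forallP/(_ j)/andP[/eqP -> _] := H1 i.
  + move=> i; by have /forallP/(_ i)/andP[_ /implyP/(_ (eqxx i))/eqP] := H1 i.
  + move=> a b c ab ac bc h1 h2.
    have /forallP/(_ b)/forallP/(_ c)/implyP := H2 a.
    rewrite !aux_le !aux_lt !aux_eq1 !aux_eq h1 h2.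
    have -> : [&& a != b, a != c & b != c] by apply/and3P; split; apply/eqP.
    move=> /(_ isT) /= /orP [/and3P [/eqP ? /eqP ? /eqP ?]|/andP[? /eqP ?]]; by [left | right].
- case=> H1 H2 H3; apply/andP; split.
  + apply/forallP => i; apply/forallP => j; apply/andP; split.
      by apply/eqP/val_inj => /=; apply: H1.
    by apply/implyP => /eqP <-; rewrite H2.
  + apply/forallP => a; apply/forallP => b; apply/forallP => c.
    apply/implyP => /and3P [/eqP ab /eqP ac /eqP bc].
    rewrite !aux_le !aux_lt !aux_eq1 !aux_eq; apply/implyP => /andP [h1 h2].
    case: (H3 a b c ab ac bc h1 h2) => [[-> [-> ->]] | [-> ->]] //.
    by rewrite eqxx andbT orbT.
Qed.
End Gen.

Definition G (T : finType) (r : nat) := [set d : {ffun T * T -> 'I_r.+1} | validT d].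

Lemma Ncount_G r k : Ncount r k = #|G 'I_k r|.
Proof.
rewrite /G cardsE; case: k => [|k] //.
rewrite (eq_card (B := predT)); last first.
  move=> d; apply/validP; split.
  - by move=> i; case: i.
  - by move=> i; case: i.
  - by move=> a; case: a.
by rewrite card_ffun card_prod !card_ord.
Qed.

Lemma VP_transfer (T1 T2 : finType) n1 n2 (f : T1 -> T2)
  (d1 : {ffun T1 * T1 -> 'I_n1.+1}) (d2 : {ffun T2 * T2 -> 'I_n2.+1}) :
  injective f -> (forall x y, nat_of_ord (d1 (x, y)) = d2 (f x, f y)) ->
  VP d2 -> VP d1.
Proof.
move=> fi E [H1 H2 H3]; split.
- by move=> i j; rewrite !E H1.
- by move=> i; rewrite E H2.
- move=> a b c ab ac bc; rewrite !E => h1 h2.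
  have nf : forall x y, x <> y -> f x <> f y by move=> x y + /fi.
  by case: (H3 _ _ _ (nf _ _ ab) (nf _ _ ac) (nf _ _ bc) h1 h2) => [[-> [-> ->]]|[-> ->]]; [left|right].
Qed.

Definition tr (T1 T2 : finType) n (f : T1 -> T2) (d : {ffun T2 * T2 -> 'I_n}) :
  {ffun T1 * T1 -> 'I_n} := [ffun p => d (f p.1, f p.2)].

Lemma card_G_eq (T1 T2 : finType) r : #|T1| = #|T2| -> #|G T1 r| = #|G T2 r|.
Proof.
move=> E.
pose f (x : T1) : T2 := enum_val (cast_ord E (enum_rank x)).
pose g (y : T2) : T1 := enum_val (cast_ord (esym E) (enum_rank y)).
have fK : cancel f g by move=> x; rewrite /f /g enum_valK cast_ordK enum_rankK.
have gK : cancel g f by move=> x; rewrite /f /g enum_valK cast_ordKV enum_rankK.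
have trK : cancel (tr (n := r.+1) f) (tr g).
  by move=> d; apply/ffunP => -[x y]; rewrite !ffunE /= !gK.
have -> : G T1 r = [set tr f d | d in G T2 r].
  apply/setP => d; rewrite inE; apply/idP/imsetP.
  - move=> vd; exists (tr g d); last first.
      by apply/ffunP => -[x y]; rewrite !ffunE /= !fK.
    rewrite inE; apply/validP; apply: (VP_transfer (f := g)) (proj1 (validP _) vd).
    - exact: can_inj gK.
    - by move=> x y; rewrite ffunE.
  - case=> d2; rewrite inE => v2 ->; apply/validP.
    apply: (VP_transfer (f := f)) (proj1 (validP _) v2).
    - exact: can_inj fK.
    - by move=> x y; rewrite ffunE.
by rewrite card_imset //; apply: can_inj trK.
Qed.

Section Compat.
Variables (T : finType) (r : nat).
Implicit Types (d : {ffun T * T -> 'I_r.+2}) (A : {set T}).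

Definition Etop d x y := nat_of_ord (d (x, y)) == r.+1.
Definition compat A d := [forall x, forall y, Etop d x y == ((x \in A) != (y \in A))].

Lemma compatP A d : reflect (forall x y, Etop d x y = ((x \in A) != (y \in A))) (compat A d).
Proof.
apply: (iffP forallP) => H x.
  by move=> y; have /forallP/(_ y)/eqP := H x.
by apply/forallP => y; rewrite H.
Qed.

Lemma d_le d x y : (nat_of_ord (d (x, y)) <= r.+1)%N.
Proof. by have := ltn_ord (d (x, y)). Qed.

Lemma Esym d x y : VP d -> Etop d x y = Etop d y x.
Proof. by case=> H1 _ _; rewrite /Etop H1. Qed.

Lemma Eirr d x : VP d -> Etop d x x = false.
Proof. by case=> _ H2 _; rewrite /Etop H2. Qed.

Lemma P1 d a b c : VP d -> Etop d a b -> Etop d a c -> Etop d b c -> False.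
Proof.
move=> V; have [H1 H2 H3] := V.
move=> eab eac ebc.
have ab : a <> b by move=> E; subst; rewrite Eirr in eab.
have ac : a <> c by move=> E; subst; rewrite Eirr in eac.
have bc : b <> c by move=> E; subst; rewrite Eirr in ebc.
move: eab eac ebc; rewrite /Etop => /eqP e1 /eqP e2 /eqP e3.
case: (H3 a b c ab ac bc); rewrite ?e1 ?e2 ?e3 //; lia.
Qed.

Lemma P2 d a b c : VP d -> Etop d a b -> ~~ Etop d a c -> Etop d b c.
Proof.
move=> V; have [H1 H2 H3] := V.
move=> eab neac.
have [ac|ac] := eqVneq a c.
  by subst; rewrite Esym.
have [bc|bc] := eqVneq b c.
  by subst; rewrite eab in neac.
have [ab|ab] := eqVneq a b.
  by subst; rewrite Eirr in eab.
apply/negPn/negP => nebc.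
move: eab neac nebc; rewrite /Etop => /eqP e1 /eqP e2 /eqP e3.
have l2 := d_le d a c. have l3 := d_le d b c.
have [h|h] := leqP (d (c, a)) (d (c, b)).
- have := H3 c a b (nesym (elimN eqP ac)) (nesym (elimN eqP bc)) (elimN eqP ab) h.
  rewrite (H1 c a) (H1 c b) e1 => /(_ ltac:(lia)); lia.
- have := H3 c b a (nesym (elimN eqP bc)) (nesym (elimN eqP ac)) (nesym (elimN eqP ab)).
  rewrite (H1 c a) (H1 c b) (H1 b a) e1 => /(_ ltac:(rewrite (H1 c a) (H1 c b) in h; lia) ltac:(lia)); lia.
Qed.

Lemma compat_exists d x0 : VP d -> compat [set y | ~~ Etop d x0 y] d.
Proof.
move=> V; apply/compatP => x y; rewrite !inE.
have [->|xx0] := eqVneq x x0.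
  by rewrite (Eirr _ V); case: (Etop d x0 y).
have [->|yx0] := eqVneq y x0.
  by rewrite (Eirr _ V) (Esym _ _ V); case: (Etop d x0 x).
case ex: (Etop d x0 x); case ey: (Etop d x0 y) => /=.
- by apply/negP => exy; apply: (P1 V ex ey exy).
- by apply: (P2 V ex); rewrite ey.
- by rewrite Esym //; apply: (P2 V ey); rewrite ex.
- apply/negP => exy.
  have := @P2 d x y x0 V exy.
  by rewrite (Esym x x0 V) ex (Esym y x0 V) ey => /(_ isT).
Qed.

Lemma compat_uniq d (x0 : T) A B : compat A d -> compat B d -> B = A \/ B = ~: A.
Proof.
move=> /compatP HA /compatP HB.
have E y : ((x0 \in A) != (y \in A)) = ((x0 \in B) != (y \in B)) by rewrite -HA -HB.
case e: ((x0 \in A) == (x0 \in B)).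
- left; apply/setP => y; have := E y; move/eqP: e => ->; by case: (x0 \in B); case: (y \in A); case: (y \in B).
- right; apply/setP => y; rewrite inE; have := E y; move: e.
  by case: (x0 \in B); case: (x0 \in A); case: (y \in A); case: (y \in B).
Qed.

Lemma compat_compl d A : compat A d -> compat (~: A) d.
Proof.
move=> /compatP H; apply/compatP => x y; rewrite !inE H.
by case: (x \in A); case: (y \in A).
Qed.

Lemma card_compat d (x0 : T) : VP d -> #|[set A | compat A d]| = 2.
Proof.
move=> V; set A0 := [set y | ~~ Etop d x0 y].
have c0 := compat_exists x0 V.
have -> : [set A | compat A d] = [set A0; ~: A0].
  apply/setP => B; rewrite !inE; apply/idP/idP.
  - move=> cB; by case: (compat_uniq x0 c0 cB) => ->; rewrite eqxx ?orbT.
  - by case/orP => /eqP ->; [|apply: compat_compl].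
rewrite cards2; suff -> : A0 != ~: A0 by [].
apply/negP => /eqP /setP /(_ x0); rewrite !inE.
by case: (Etop d x0 x0).
Qed.
End Compat.

Section Glue.
Variables (T : finType) (r : nat).

Definition res (S : {set T}) (d : {ffun T * T -> 'I_r.+2}) :
  {ffun {x : T | x \in S} * {x : T | x \in S} -> 'I_r.+1} :=
  [ffun p => inord (d (val p.1, val p.2))].

Definition extv (S : {set T}) (e : {ffun {x : T | x \in S} * {x : T | x \in S} -> 'I_r.+1})
  (x y : T) : nat :=
  match (insub x : option {x : T | x \in S}), (insub y : option {x : T | x \in S}) with
  | Some u, Some v => e (u, v)
  | _, _ => 0%N
  end.

Definition glue (A : {set T}) (e1 : {ffun {x : T | x \in A} * {x : T | x \in A} -> 'I_r.+1})
  (e2 : {ffun {x : T | x \in ~: A} * {x : T | x \in ~: A} -> 'I_r.+1}) :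
  {ffun T * T -> 'I_r.+2} :=
  [ffun p => if (p.1 \in A) == (p.2 \in A) then
               inord (if p.1 \in A then extv e1 p.1 p.2 else extv e2 p.1 p.2)
             else ord_max].

Lemma extv_le (S : {set T}) (e : {ffun {x : T | x \in S} * {x : T | x \in S} -> 'I_r.+1}) x y : (@extv S e x y <= r)%N.
Proof.
rewrite /extv; case: (insub x) => [u|] //; case: (insub y) => [v|] //.
by have := ltn_ord (e (u, v)).
Qed.

Lemma extv_sub (S : {set T}) (e : {ffun {x : T | x \in S} * {x : T | x \in S} -> 'I_r.+1}) x y (hx : x \in S) (hy : y \in S) :
  @extv S e x y = e (Sub x hx, Sub y hy).
Proof. by rewrite /extv (insubT (fun z => z \in S) hx) (insubT (fun z => z \in S) hy). Qed.

Lemma extv_val (S : {set T}) (e : {ffun {x : T | x \in S} * {x : T | x \in S} -> 'I_r.+1}) u v : @extv S e (val u) (val v) = e (u, v).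
Proof. by rewrite /extv !valK. Qed.

Lemma extv_sym (S : {set T}) (e : {ffun {x : T | x \in S} * {x : T | x \in S} -> 'I_r.+1}) x y : VP e -> @extv S e x y = extv e y x.
Proof.
case=> H1 _ _; rewrite /extv.
by case: (insub x) => [u|] //; case: (insub y) => [v|] //.
Qed.

Lemma extv_diag (S : {set T}) (e : {ffun {x : T | x \in S} * {x : T | x \in S} -> 'I_r.+1}) x : VP e -> @extv S e x x = 0%N.
Proof. by case=> _ H2 _; rewrite /extv; case: (insub x) => [u|] //. Qed.

Variable A : {set T}.

Lemma glue_val (e1 : {ffun {x : T | x \in A} * {x : T | x \in A} -> 'I_r.+1}) (e2 : {ffun {x : T | x \in ~: A} * {x : T | x \in ~: A} -> 'I_r.+1}) x y : nat_of_ord (glue e1 e2 (x, y)) =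
  if (x \in A) == (y \in A) then (if x \in A then extv e1 x y else extv e2 x y) else r.+1.
Proof.
rewrite ffunE /=; case: ifP => _ //.
by rewrite inordK //; case: ifP => _; rewrite ltnS ltnW // ltnS extv_le.
Qed.

Lemma res_glue1 (e1 : {ffun {x : T | x \in A} * {x : T | x \in A} -> 'I_r.+1}) (e2 : {ffun {x : T | x \in ~: A} * {x : T | x \in ~: A} -> 'I_r.+1}) : res A (glue e1 e2) = e1.
Proof.
apply/ffunP => -[u v]; apply/val_inj; rewrite ffunE /= glue_val.
rewrite (valP u) (valP v) /= extv_val inordK //.
Qed.

Lemma res_glue2 (e1 : {ffun {x : T | x \in A} * {x : T | x \in A} -> 'I_r.+1}) (e2 : {ffun {x : T | x \in ~: A} * {x : T | x \in ~: A} -> 'I_r.+1}) : res (~: A) (glue e1 e2) = e2.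
Proof.
apply/ffunP => -[u v]; apply/val_inj; rewrite ffunE /= glue_val.
have hu := valP u; have hv := valP v; rewrite /= inE in hu; rewrite /= inE in hv.
rewrite (negbTE hu) (negbTE hv) /= extv_val inordK //.
Qed.

Lemma glue_compat (e1 : {ffun {x : T | x \in A} * {x : T | x \in A} -> 'I_r.+1}) (e2 : {ffun {x : T | x \in ~: A} * {x : T | x \in ~: A} -> 'I_r.+1}) : compat A (glue e1 e2).
Proof.
apply/compatP => x y; rewrite /Etop glue_val.
case: (x \in A); case: (y \in A) => /=; rewrite ?eqxx //.
- by apply/negbTE; rewrite neq_ltn ltnS extv_le.
- by apply/negbTE; rewrite neq_ltn ltnS extv_le.
Qed.

Lemma glue_res (d : {ffun T * T -> 'I_r.+2}) : VP d -> compat A d -> glue (res A d) (res (~: A) d) = d.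
Proof.
move=> V /compatP C; apply/ffunP => -[x y]; apply/val_inj; rewrite /= glue_val.
have := C x y; rewrite /Etop.
have le := d_le d x y.
case hx: (x \in A); case hy: (y \in A) => /= E.
- rewrite (extv_sub _ hx hy) ffunE /= inordK //.
  by move/eqP: E; lia.
- by apply/esym/eqP; rewrite E.
- by apply/esym/eqP; rewrite E.
- have hx' : x \in ~: A by rewrite inE hx.
  have hy' : y \in ~: A by rewrite inE hy.
  rewrite (extv_sub _ hx' hy') ffunE /= inordK //.
  by move/eqP: E; lia.
Qed.

Lemma glue_valid (e1 : {ffun {x : T | x \in A} * {x : T | x \in A} -> 'I_r.+1}) (e2 : {ffun {x : T | x \in ~: A} * {x : T | x \in ~: A} -> 'I_r.+1}) : VP e1 -> VP e2 -> VP (glue e1 e2).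
Proof.
move=> V1 V2; have [_ _ H1] := V1; have [_ _ H2] := V2; split.
- move=> i j; rewrite !glue_val (eq_sym (j \in A)).
  by case: (i \in A); case: (j \in A) => //=; rewrite extv_sym.
- by move=> i; rewrite glue_val eqxx; case: (i \in A); rewrite extv_diag.
- move=> a b c ab ac bc; rewrite !glue_val.
  have l1 := extv_le e1 a b; have l2 := extv_le e1 a c; have l3 := extv_le e1 b c.
  have l4 := extv_le e2 a b; have l5 := extv_le e2 a c; have l6 := extv_le e2 b c.
  case ha: (a \in A); case hb: (b \in A); case hc: (c \in A) => /=; try lia.
  + rewrite (extv_sub _ ha hb) (extv_sub _ ha hc) (extv_sub _ hb hc).
    apply: H1; by move/(f_equal val).
  + have ha' : a \in ~: A by rewrite inE ha.
    have hb' : b \in ~: A by rewrite inE hb.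
    have hc' : c \in ~: A by rewrite inE hc.
    rewrite (extv_sub _ ha' hb') (extv_sub _ ha' hc') (extv_sub _ hb' hc').
    apply: H2; by move/(f_equal val).
Qed.

Lemma res_valid (S : {set T}) (d : {ffun T * T -> 'I_r.+2}) : VP d -> (forall x y, x \in S -> y \in S -> ~~ Etop d x y) ->
  VP (res S d).
Proof.
move=> V N; apply: (VP_transfer (f := val)) V; first exact: val_inj.
move=> u v; rewrite ffunE /= inordK //.
have := N _ _ (valP u) (valP v); rewrite /Etop; have := d_le d (val u) (val v).
by move=> h1 /eqP h2; simpl in *; lia.
Qed.
End Glue.

Lemma count_A (T : finType) r (A : {set T}) :
  #|[set d : {ffun T * T -> 'I_r.+2} | validT d && compat A d]| =
  #|G {x : T | x \in A} r| * #|G {x : T | x \in ~: A} r|.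
Proof.
rewrite -cardsX.
pose g (p : {ffun {x : T | x \in A} * {x : T | x \in A} -> 'I_r.+1} *
            {ffun {x : T | x \in ~: A} * {x : T | x \in ~: A} -> 'I_r.+1}) :=
  glue p.1 p.2.
have gK : cancel g (fun d => (res A d, res (~: A) d)).
  by case=> e1 e2; rewrite /g /= res_glue1 res_glue2.
have -> : [set d : {ffun T * T -> 'I_r.+2} | validT d && compat A d] =
          [set g p | p in setX (G {x : T | x \in A} r) (G {x : T | x \in ~: A} r)].
  apply/setP => d; rewrite inE; apply/idP/imsetP.
  - case/andP => /validP V c; exists (res A d, res (~: A) d); last first.
      by rewrite /g /= glue_res.
    have /compatP C := c.
    rewrite inE /G !inE /=; apply/andP; split; apply/validP.
    + apply: (@res_valid T r A d V).
      by move=> x y hx hy; rewrite C hx hy.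
    + apply: (@res_valid T r (~: A) d V).
      by move=> x y; rewrite !inE C => /negbTE -> /negbTE ->.
  - case=> -[e1 e2]; rewrite inE /G !inE /= => /andP [/validP v1 /validP v2] ->.
    by rewrite /g /=; apply/andP; split; [apply/validP; apply: glue_valid | apply: glue_compat].
by rewrite card_imset //; apply: can_inj gK.
Qed.

Lemma sub_card (T : finType) r (A : {set T}) : #|G {x : T | x \in A} r| = Ncount r #|A|.
Proof.
rewrite Ncount_G; apply: card_G_eq.
by rewrite card_sig card_ord; apply: eq_card => x.
Qed.

Lemma card_sum (T : finType) (P : pred T) : #|[set x | P x]| = \sum_x (P x : nat).
Proof.
rewrite -sum1_card big_mkcond /=; apply: eq_bigr => x _; rewrite inE.
by case: (P x).
Qed.

Lemma double (T : finType) r (x0 : T) :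
  (2 * #|G T r.+1| = \sum_(A : {set T}) #|[set d : {ffun T * T -> 'I_r.+2} | validT d && compat A d]|)%N.
Proof.
under eq_bigr => A _ do rewrite card_sum.
rewrite exchange_big /= /G card_sum big_distrr /=; apply: eq_bigr => d _.
case v: (validT d) => /=; last by rewrite big1.
rewrite -(card_compat x0 (proj1 (validP d) v)) card_sum muln1.
by [].
Qed.

Lemma sum_by_card (T : finType) (F : nat -> nat) :
  \sum_(A : {set T}) F #|A| = \sum_(a < #|T|.+1) 'C(#|T|, a) * F a.
Proof.
rewrite (partition_big (fun A : {set T} => (inord #|A| : 'I_#|T|.+1)) predT) //=.
apply: eq_bigr => j _.
rewrite (eq_bigr (fun _ => F j)); last first.
  move=> A /eqP <-; rewrite inordK //; rewrite ltnS; exact: max_card.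
rewrite sum_nat_const -card_draws; congr (_ * _).
apply: eq_card => A; rewrite !inE /=.
by rewrite unfold_in /= inordK // ltnS max_card.
Qed.

Lemma recurrence r k : (0 < k)%N ->
  (2 * Ncount r.+1 k = \sum_(a < k.+1) 'C(k, a) * Ncount r a * Ncount r (k - a))%N.
Proof.
case: k => [|k] // _.
rewrite Ncount_G (double _ (ord0 : 'I_k.+1)).
under eq_bigr => A _ do rewrite count_A !sub_card.
have := sum_by_card 'I_k.+1 (fun a => Ncount r a * Ncount r (k.+1 - a)).
rewrite card_ord => E.
transitivity (\sum_(a < k.+2) 'C(k.+1, a) * (Ncount r a * Ncount r (k.+1 - a)));
  last by apply: eq_bigr => a _; rewrite mulnA.
rewrite -E.
apply: eq_bigr => A _; congr (_ * Ncount r _).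
rewrite (cardsCs (~: A)) setCK card_ord. done.
Qed.

Lemma Ncount0 k : Ncount 0 k = 1%N.
Proof.
rewrite Ncount_G /G.
have z : forall x : 'I_1, nat_of_ord x = 0%N by case=> [[|m]].
have -> : [set d : {ffun 'I_k * 'I_k -> 'I_1} | validT d] = setT.
  apply/setP => d; rewrite !inE; apply/validP; split.
  - by move=> i j; rewrite !z.
  - by move=> i; rewrite z.
  - by move=> *; left; rewrite !z.
by rewrite cardsT card_ffun card_ord exp1n.
Qed.

Local Open Scope ring_scope.

Lemma tri (R : zmodType) (F : nat -> nat -> R) N :
  \sum_(n < N) \sum_(i < n.+1) F i (n - i)%N = \sum_(i < N) \sum_(j < N - i) F i j.
Proof.
elim: N => [|N IH]; first by rewrite !big_ord0.
rewrite big_ord_recr IH.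
have -> : \sum_(i < N.+1) \sum_(j < N.+1 - i) F i j =
          \sum_(i < N.+1) (\sum_(j < N - i) F i j + F i (N - i)%N).
  apply: eq_bigr => i _.
  have hi : (i <= N)%N by rewrite -ltnS ltn_ord.
  by rewrite (subSn hi) big_ord_recr.
rewrite big_split; congr (_ + _).
rewrite [RHS]big_ord_recr.
have e : (N - (@ord_max N : nat) = 0)%N by apply/eqP; rewrite subn_eq0.
by rewrite e big_ord0 Monoid.mulm1.
Qed.
Lemma trunc (R : zmodType) (F : nat -> R) A B : (A <= B)%N -> (forall m, (A <= m)%N -> F m = 0) ->
  \sum_(m < B) F m = \sum_(m < A) F m.
Proof.
move=> AB FZ; rewrite (big_ord_widen B F AB) [RHS]big_mkcond; apply: eq_bigr => i _.
by case: ifP => // /negbT; rewrite -leqNgt => /FZ ->.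
Qed.

Section Moments.
Variable R : realFieldType.

Fixpoint nu (r : nat) : nat -> R :=
  match r with
  | 0 => fun m => (m == 1%N)%:R
  | r'.+1 => fun n => ((n == 0%N)%:R + \sum_(i < n.+1) nu r' i * nu r' (n - i)) / 2%:R
  end.

Lemma nu_ge0 r m : 0 <= nu r m.
Proof.
elim: r m => [|r IH] m /=; first by rewrite ler0n.
apply: divr_ge0; last by rewrite ler0n.
apply: addr_ge0; first by rewrite ler0n.
by apply: sumr_ge0 => i _; apply: mulr_ge0.
Qed.

Lemma nu_supp r m : (2 ^ r < m)%N -> nu r m = 0.
Proof.
elim: r m => [|r IH] m /=.
  by rewrite expn0 => h; case: m h => [|[|m]].
rewrite expnS => h.
have -> : (m == 0%N) = false by apply/negbTE; rewrite -lt0n; apply: leq_ltn_trans h.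
rewrite add0r big1 ?mul0r // => i _.
have [hi|hi] := leqP i (2 ^ r).
  rewrite (IH (m - i)%N) ?mulr0 //; lia.
by rewrite IH ?mul0r.
Qed.

Lemma nu0 r : nu r 0 = 1 - mu R r.
Proof.
elim: r => [|r IH] /=; first by rewrite subrr.
rewrite big_ord1 /= IH.
have h2 : (2%:R : R) != 0 by rewrite pnatr_eq0.
apply: (mulIf h2); rewrite divfK //. by field.
Qed.

Definition Mom r k := \sum_(m < (2 ^ r).+1) nu r m * (m%:R) ^+ k.

Lemma Mom_step r k : Mom r.+1 k =
  (0%:R ^+ k + \sum_(a < k.+1) Mom r a * Mom r (k - a) *+ 'C(k, a)) / 2%:R.
Proof.
set S := (2 ^ r)%N.
have eN : (2 ^ r.+1 = S + S)%N by rewrite expnS /S; lia.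
pose f := nu r.
have step1 : Mom r.+1 k = (\sum_(n < (2 ^ r.+1).+1) (nat_of_ord n == 0%N)%:R * n%:R ^+ k +
     \sum_(n < (2 ^ r.+1).+1) (\sum_(i < n.+1) f i * f (n - i)%N) * n%:R ^+ k) / 2%:R.
  rewrite /Mom -big_split mulr_suml; apply: eq_bigr => n _.
  by rewrite [nu r.+1 n]/= mulrAC mulrDl.
rewrite step1; congr ((_ + _) / _).
  rewrite big_ord_recl /= mul1r big1 ?addr0 // => i _.
  by rewrite mul0r.
pose F (i j : nat) := f i * f j * (i + j)%:R ^+ k.
transitivity (\sum_(n < (2 ^ r.+1).+1) \sum_(i < n.+1) F i (n - i)%N).
  apply: eq_bigr => n _; rewrite mulr_suml; apply: eq_bigr => i _.
  by rewrite /F subnKC // -ltnS.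
rewrite tri.
rewrite (@trunc _ (fun i => \sum_(j < (2 ^ r.+1).+1 - i) F i j) S.+1); last first.
- move=> m hm; apply: big1 => j _; by rewrite /F /f nu_supp // !mul0r.
- by rewrite eN; lia.
transitivity (\sum_(i < S.+1) \sum_(j < S.+1) F i j).
  apply: eq_bigr => i _; apply: trunc.
  - have := ltn_ord i; rewrite eN; lia.
  - by move=> m hm; rewrite /F /f (@nu_supp r m hm) mulr0 mul0r.
transitivity (\sum_(i < S.+1) \sum_(j < S.+1) \sum_(a < k.+1)
    (f i * i%:R ^+ a) * (f j * j%:R ^+ (k - a)) *+ 'C(k, a)).
  apply: eq_bigr => i _; apply: eq_bigr => j _.
  rewrite /F natrD addrC exprDn mulr_sumr; apply: eq_bigr => a _.
  rewrite mulrnAr; congr (_ *+ _); ring.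
under eq_bigr => i _ do rewrite exchange_big.
rewrite exchange_big; apply: eq_bigr => a _.
rewrite /Mom mulr_suml -sumrMnl; apply: eq_bigr => i _.
by rewrite mulr_sumr -sumrMnl.
Qed.

Lemma Mom_N r k : Mom r k = (Ncount r k)%:R.
Proof.
elim: r k => [|r IH] k.
  rewrite /Mom Ncount0 expn0 big_ord_recr big_ord1 /= mul0r add0r mul1r.
  by rewrite expr1n.
rewrite Mom_step.
under eq_bigr => a _ do rewrite !IH.
have h2 : (2%:R : R) != 0 by rewrite pnatr_eq0.
case: k => [|k].
  rewrite big_ord1 expr0.
  have -> : Ncount r ord0 = 1%N by [].
  rewrite mul1r (_ : 'C(0, ord0) = 1%N) // mulr1n.
  by field.
rewrite (_ : 0%:R = 0 :> R) // exprS mul0r add0r.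
apply: (mulIf h2); rewrite divfK // -natrM mulnC recurrence //.
rewrite natr_sum; apply: eq_bigr => a _.
by rewrite !natrM -mulr_natl mulrA.
Qed.
End Moments.

Close Scope ring_scope.

Theorem mainTheorem14 :
  (forall k : nat, Ncount 0 k = 1%N) /\
  (forall r k : nat, (0 < k)%N ->
     (2 * Ncount r.+1 k = \sum_(a < k.+1) 'C(k, a) * Ncount r a * Ncount r (k - a))%N) /\
  (forall (R : realFieldType) (r : nat),
     exists nu : nat -> R,
       [/\ (forall m : nat, (m <= 2 ^ r)%N -> (0 <= nu m)%R),
           (\sum_(m < (2 ^ r).+1) nu m = 1)%R,
           (forall k : nat,
              ((Ncount r k)%:R = \sum_(m < (2 ^ r).+1) nu m * (m%:R) ^+ k)%R)
         & nu 0%N = (1 - mu R r)%R]).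
Proof.
split; first exact: Ncount0.
split; first exact: recurrence.
move=> R r; exists (nu R r); split.
- by move=> m _; apply: nu_ge0.
- have := Mom_N R r 0; rewrite /Mom => E.
  rewrite -[RHS](_ : (Ncount r 0)%:R = 1)%R // -E.
  by apply: eq_bigr => m _; rewrite GRing.expr0 GRing.mulr1.
- by move=> k; rewrite -Mom_N.
- exact: nu0.
Qed.
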